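(* Let $\mathcal{G}$ and $\mathcal{F}$ be quantum isomorphic quantum graphs. Then for every $r\geq1$ the quantum graphs $\mu_{r-1}(\mathcal{G})$ and $\mu_{r-1}(\mathcal{F})$ are quantum isomorphic.
   Context: Quantum graph $\mathcal{G}=(C(\mathcal{G}),\psi_{\mathcal{G}},A_{\mathcal{G}})$: $C(\mathcal{G})$ finite-dimensional C*-algebra, $\psi_{\mathcal{G}}$ a faithful state with $mm^*=\delta_{\mathcal{G}}^2\mathrm{id}$ on the GNS space $L^2(\mathcal{G})$ ($m$ the multiplication, $\delta_{\mathcal{G}}>0$), $A_{\mathcal{G}}$ self-adjoint on $L^2(\mathcal{G})$ with $m(A\otimes A)m^*=A$ and $A=(\mathrm{id}\otimes\eta^*m)(\mathrm{id}\otimes A\otimes\mathrm{id})(m^*\eta\otimes\mathrm{id})$, $\eta$ the unit map. Quantum isomorphism: choosing orthonormal bases $\{e_j\}$ of $L^2(\mathcal{G})$, $\{f_i\}$ of $L^2(\mathcal{F})$, $\mathcal{G}$ and $\mathcal{F}$ are quantum isomorphic iff the universal $*$-algebra generated by entries $p_{ij}$ of a unitary matrix subject to relations making $e_j\mapsto\sum_i f_i\otimes p_{ij}$ a unital $*$-homomorphism $C(\mathcal{G})\to C(\mathcal{F})\otimes(\cdot)$ with $\rho A_{\mathcal{G}}=(A_{\mathcal{F}}\otimes\mathrm{id})\rho$ is non-zero. Quantum Mycielskian of order $r-1$ ($r\ge2$): $C(\mu_{r-1}(\mathcal{G}))=\mathbb{C}\oplus\bigoplus_{k=1}^rC(\mathcal{G})$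 with state $\psi(\lambda,x_1,\dots,x_r)=\frac{1}{1+r\delta_{\mathcal{G}}^2}\bigl(\lambda+\delta_{\mathcal{G}}^2\sum_k\psi_{\mathcal{G}}(x_k)\bigr)$ and adjacency operator $A(\lambda,x_1,\dots,x_r)=(y_0,y_1,\dots,y_r)$ where $y_0=\delta_{\mathcal{G}}^2\psi_{\mathcal{G}}(x_r)$, $y_1=A_{\mathcal{G}}(x_1+x_2)$, $y_k=A_{\mathcal{G}}(x_{k-1}+x_{k+1})$ for $2\le k\le r-1$, $y_r=\lambda\mathbf{1}+A_{\mathcal{G}}x_{r-1}$ (for $r=2$: $y_1=A_{\mathcal{G}}(x_1+x_2)$, $y_2=\lambda\mathbf 1+A_{\mathcal{G}}x_1$). For $r=1$, $\mu_0(\mathcal{G})=\mathcal{G}$. *)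

(* Defs.v *)
(* Quantum graphs are encoded in coordinates with respect to
   an orthonormal basis of the GNS space. *)
From mathcomp Require Import all_boot all_order all_algebra.
From mathcomp Require Import complex.
From mathcomp Require Import reals Rstruct.
Set Implicit Arguments. Unset Strict Implicit. Unset Printing Implicit Defensive.
Import Order.TTheory GRing.Theory Num.Theory.
Local Open Scope ring_scope.

Definition C : numClosedFieldType := Rdefinitions.R[i].

(* A (finite-dimensional) algebra with an orthonormal basis {e_i | i : qidx}
   of its GNS space, given by coordinates:
     qmul k i j = <e_k, e_i e_j>       (structure constants of m)
     qstar k i  = <e_k, e_i^*>         (the involution)
     qunit k    = <e_k, 1>             (the unit, i.e. eta(1))
     qadj k j   = <e_k, A e_j>         (matrix of the adjacency operator)
     qdelta     = delta                                                     *)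
Record qgraph := QGraph {
  qidx : finType;
  qmul : qidx -> qidx -> qidx -> C;
  qstar : qidx -> qidx -> C;
  qunit : qidx -> C;
  qadj : qidx -> qidx -> C;
  qdelta : C }.
Arguments qmul : clear implicits.
Arguments qstar : clear implicits.
Arguments qunit : clear implicits.
Arguments qadj : clear implicits.

Definition is_qgraph (G : qgraph) : Prop :=
  let c := qmul G in let s := qstar G in let u := qunit G in
  let A := qadj G in let d := qdelta G in
      (forall i j l q, \sum_p c p i j * c q p l = \sum_p c q i p * c p j l) /\
      (forall i k, \sum_j u j * c k j i = (k == i)%:R)
      /\ (forall i k, \sum_j u j * c k i j = (k == i)%:R) /\
      (* the antilinear map e_i |-> e_i^* is an involution (star (star x) = x) ... *)
      (forall i k, \sum_j (s j i)^* * s k j = (k == i)%:R) /\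
      (* ... and anti-multiplicative: (e_i e_j)^* = e_j^* e_i^* *)
      (forall i j l, \sum_k (c k i j)^* * s l k
                     = \sum_a \sum_b s a j * s b i * c l a b) /\
      (* psi(x) := <1, x> is a state (psi(1) = 1) and the GNS inner product
         psi(x^* y) coincides with the given one, i.e. (e_i) is orthonormal *)
      (\sum_k (u k)^* * u k = 1)
      /\ (forall i j, \sum_k (u k)^* * (\sum_a s a i * c k a j) = (i == j)%:R) /\
      (* delta-form: delta > 0 and m m^* = delta^2 id *)
      (0 < d) /\ (forall k l, \sum_i \sum_j c k i j * (c l i j)^* = d ^+ 2 * (k == l)%:R) /\
      (* adjacency operator: self-adjoint, m (A (x) A) m^* = A,
         A = (id (x) eta^* m)(id (x) A (x) id)(m^* eta (x) id) *)
      [/\ (forall k j, (A j k)^* = A k j),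
          (forall k l, \sum_i \sum_j \sum_i' \sum_j'
                         c k i j * A i i' * A j j' * (c l i' j')^* = A k l) &
          (forall i q, \sum_j \sum_p \sum_l \sum_k
                         (c l i j)^* * u l * A p j * (u k)^* * c k p q = A i q)].

Definition is_star (P : algType C) (star : P -> P) : Prop :=
  [/\ forall x y, star (x + y) = star x + star y,
      forall (a : C) x, star (a *: x) = a^* *: star x,
      forall x y, star (x * y) = star y * star x &
      forall x, star (star x) = x].

(* Quantum isomorphism: the universal *-algebra generated by the entries p_ij
   of a unitary matrix such that rho(e_j) = sum_i f_i (x) p_ij is a unital
   *-homomorphism intertwining the adjacency operators is non-zero; i.e.
   there is a non-zero (1 != 0, built into algType) unital *-algebra P
   containing such elements p_ij. *)
Definition qiso (G F : qgraph) : Prop :=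
  exists (P : algType C) (star : P -> P) (p : qidx F -> qidx G -> P),
  is_star star /\
      (forall i k, \sum_j p i j * star (p k j) = (i == k)%:R)
      /\ (forall j l, \sum_i star (p i j) * p i l = (j == l)%:R) /\
      (* rho multiplicative: rho(e_a e_b) = rho(e_a) rho(e_b) *)
      (forall l a b, \sum_k qmul G k a b *: p l k
                     = \sum_i \sum_j qmul F l i j *: (p i a * p j b)) /\
      (* rho is star-preserving: rho(star e_a) = star (rho e_a) *)
      (forall l a, \sum_k qstar G k a *: p l k = \sum_i qstar F l i *: star (p i a)) /\
      (* rho unital: rho(1) = 1 (x) 1 *)
      (forall l, \sum_k qunit G k *: p l k = (qunit F l)%:A) /\
      (* rho A_G = (A_F (x) id) rho *)
      (forall l j, \sum_k qadj G k j *: p l k = \sum_i qadj F l i *: p i j).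

(* Which x_k (0-indexed slot k) enter y_k' (0-indexed slot k') through A_G,
   for r >= 2:  y_1 = A(x_1 + x_2), y_k = A(x_{k-1} + x_{k+1}), y_r = ... + A x_{r-1}. *)
Definition myc_link (r k' k : nat) : bool :=
  if k' == 0%N then (k <= 1)%N
  else if k' == r.-1 then k == r.-2
  else (k == k'.-1) || (k == k'.+1).

(* The quantum Mycielskian of order r-1 (r >= 2), written in the orthonormal
   basis  E_0 = (sqrt N, 0),  E_(k,j) = (0, .., (sqrt N / delta) e_j at slot k, ..)
   of its GNS space, where N = 1 + r delta^2 (index None is E_0). *)
Section Myc.
Variables (r : nat) (G : qgraph).
Let I := qidx G.
Let d := qdelta G.
Let N : C := 1 + r%:R * d ^+ 2.
Let a : C := sqrtC N.
Let b : C := a / d.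

Definition myc_idx : finType := option ('I_r * I).

Definition myc_mul (k i j : myc_idx) : C :=
  match k, i, j with
  | None, None, None => a
  | Some (k0, l), Some (k1, i'), Some (k2, j') =>
      if (k1 == k0) && (k2 == k0) then b * qmul G l i' j' else 0
  | _, _, _ => 0
  end.

Definition myc_star (k i : myc_idx) : C :=
  match k, i with
  | None, None => 1
  | Some (k0, l), Some (k1, j) => if k0 == k1 then qstar G l j else 0
  | _, _ => 0
  end.

Definition myc_unit (k : myc_idx) : C :=
  match k with
  | None => a^-1
  | Some (_, l) => qunit G l / b
  end.

Definition myc_adj (k j : myc_idx) : C :=
  match k, j with
  | None, None => 0
  | Some (k', l), None => if (k' : nat) == r.-1 then a * qunit G l / b else 0
  | None, Some (k, j') => if (k : nat) == r.-1 then d ^+ 2 * b * (qunit G j')^* / a else 0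
  | Some (k', l), Some (k, j') => if myc_link r k' k then qadj G l j' else 0
  end.

Definition myc : qgraph :=
  @QGraph myc_idx myc_mul myc_star myc_unit myc_adj a.
End Myc.

Definition qmu (n : nat) (G : qgraph) : qgraph :=
  match n with
  | 0%N => G
  | n'.+1 => myc n'.+2 G
  end.

(* Main.v *)
Require Import Defs.
From mathcomp Require Import all_boot all_order all_algebra complex ring.
Import Order.TTheory GRing.Theory Num.Theory.
Set Implicit Arguments. Unset Strict Implicit.
Local Open Scope ring_scope.

Lemma sum_delta (T : finType) (V : comPzRingType) (l : T) (f : T -> V) :
  \sum_n f n * (n == l)%:R = f l.
Proof.
rewrite (bigD1 l) //= eqxx mulr1 big1 ?addr0 // => k /negbTE ->.
by rewrite mulr0.
Qed.

Lemma exch3 (I : finType) (R : Type) (idx : R) (op : Monoid.com_law idx) (F : I -> I -> I -> R) :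
  \big[op/idx]_m \big[op/idx]_a \big[op/idx]_b F m a b = \big[op/idx]_a \big[op/idx]_b \big[op/idx]_m F m a b.
Proof. rewrite exchange_big; apply: eq_bigr => a _; exact: exchange_big. Qed.

Lemma qH (I : finType) (K : numClosedFieldType) (c : I -> I -> I -> K) (s : I -> I -> K) (u : I -> K)
  (hA : forall i j l q, \sum_p c p i j * c q p l = \sum_p c q i p * c p j l)
  (hS2 : forall i j l, \sum_k (c k i j)^* * s l k = \sum_a \sum_b s a j * s b i * c l a b)
  (hP2 : forall i j, \sum_k (u k)^* * (\sum_a s a i * c k a j) = (i == j)%:R) :
  forall l i j, (c l i j)^* = \sum_b s b i * c j b l.
Proof.
move=> l i j.
transitivity (\sum_n (c n i j)^* * (\sum_k (u k)^* * \sum_m s m n * c k m l)).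
  by rewrite -(sum_delta l (fun n => (c n i j)^*)); apply: eq_bigr => n _; rewrite hP2.
transitivity (\sum_k (u k)^* * \sum_m c k m l * (\sum_n (c n i j)^* * s m n)).
  under eq_bigr => n _ do (rewrite mulr_sumr; under eq_bigr => k _ do rewrite !mulr_sumr).
  rewrite exchange_big; apply: eq_bigr => k _.
  rewrite mulr_sumr exchange_big; apply: eq_bigr => m _.
  rewrite !mulr_sumr; apply: eq_bigr => n _ /=. ring.
under eq_bigr => k _ do under eq_bigr => m _ do rewrite hS2.
transitivity (\sum_m (\sum_b s b i * c m b l) * (\sum_k (u k)^* * \sum_a s a j * c k a m)).
  transitivity (\sum_k \sum_a \sum_b (u k)^* * s a j * s b i * \sum_m c m a b * c k m l).
    apply: eq_bigr => k _.
    under eq_bigr => m _ do (rewrite mulr_sumr; under eq_bigr => a _ do rewrite mulr_sumr).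
    rewrite mulr_sumr /=.
    under eq_bigr => m _ do rewrite mulr_sumr.
    under eq_bigr => m _ do under eq_bigr => a _ do rewrite mulr_sumr.
    rewrite exch3; apply: eq_bigr => a _; apply: eq_bigr => b _.
    rewrite mulr_sumr; apply: eq_bigr => m _ /=; ring.
  under eq_bigr => k _ do under eq_bigr => a _ do under eq_bigr => b _ do rewrite hA.
  under [in RHS]eq_bigr => m _ do rewrite mulr_suml.
  under [in RHS]eq_bigr => m _ do under eq_bigr => b _ do rewrite mulr_sumr.
  under [in RHS]eq_bigr => m _ do under eq_bigr => b _ do under eq_bigr => k _ do rewrite mulrA mulr_sumr.
  under [in RHS]eq_bigr => m _ do rewrite exch3.
  apply/esym.
  rewrite exch3; apply: eq_bigr => k _; apply: eq_bigr => a _.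
  rewrite exchange_big; apply: eq_bigr => b _; rewrite mulr_sumr; apply: eq_bigr => p _ /=.
  ring.
rewrite (eq_bigr (fun m => (\sum_b s b i * c m b l) * (m == j)%:R)) ?sum_delta //.
by move=> m _; rewrite hP2 eq_sym.
Qed.

Lemma sum_delta' (T : finType) (V : comPzRingType) (l : T) (f : T -> V) :
  \sum_n f n * (l == n)%:R = f l.
Proof. by rewrite -(sum_delta l f); apply: eq_bigr => n _; rewrite eq_sym. Qed.

Lemma qD (I : finType) (K : numClosedFieldType) (c : I -> I -> I -> K) (s : I -> I -> K) (u : I -> K) (d : K)
  (hH : forall l i j, (c l i j)^* = \sum_b s b i * c j b l)
  (hU2 : forall i k, \sum_j u j * c k i j = (k == i)%:R)
  (hD : forall k l, \sum_i \sum_j c k i j * (c l i j)^* = d ^+ 2 * (k == l)%:R) :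
  forall k, \sum_a \sum_j s j a * c k a j = d ^+ 2 * u k.
Proof.
move=> k.
transitivity (\sum_i \sum_j \sum_b c k i j * s b i * \sum_l u l * c j b l).
  apply: eq_bigr => a _; apply: eq_bigr => j _.
  under eq_bigr => b _ do rewrite hU2.
  by rewrite sum_delta' mulrC.
transitivity (\sum_l u l * (d ^+ 2 * (k == l)%:R)); last first.
  by rewrite (eq_bigr (fun l => d ^+ 2 * u l * (k == l)%:R)) ?sum_delta' // => l _; ring.
under [in RHS]eq_bigr => l _ do rewrite -hD.
under [in RHS]eq_bigr => l _ do under eq_bigr => i _ do under eq_bigr => j _ do rewrite hH mulr_sumr.
under [in RHS]eq_bigr => l _ do rewrite mulr_sumr.
under [in RHS]eq_bigr => l _ do under eq_bigr => i _ do rewrite mulr_sumr.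
under [in RHS]eq_bigr => l _ do under eq_bigr => i _ do under eq_bigr => j _ do rewrite mulr_sumr.
rewrite [in RHS]exch3; apply: eq_bigr => i _; apply: eq_bigr => j _.
rewrite exchange_big; apply: eq_bigr => b _; rewrite mulr_sumr; apply: eq_bigr => l _ /=.
ring.
Qed.

Lemma sum_deltaA (T : finType) (K : numClosedFieldType) (P : algType K) (i : T) (f : T -> K) :
  \sum_t f t *: ((i == t)%:R : P) = f i *: 1.
Proof.
rewrite (bigD1 i) //= eqxx big1 ?addr0 // => t /negbTE.
by rewrite eq_sym => ->; rewrite scaler0.
Qed.

Lemma qdelta2 (K : numClosedFieldType) (IG IF : finType) (P : algType K) (star : P -> P)
  (p : IF -> IG -> P) (cG : IG -> IG -> IG -> K) (sG : IG -> IG -> K) (uG : IG -> K)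
  (cF : IF -> IF -> IF -> K) (sF : IF -> IF -> K) (uF : IF -> K) (dG dF : K)
  (hU1 : forall i k, \sum_j p i j * star (p k j) = (i == k)%:R)
  (hM : forall l a b, \sum_k cG k a b *: p l k = \sum_i \sum_j cF l i j *: (p i a * p j b))
  (hS : forall l a, \sum_k sG k a *: p l k = \sum_i sF l i *: star (p i a))
  (hU : forall l, \sum_k uG k *: p l k = (uF l)%:A)
  (hDG : forall k, \sum_a \sum_j sG j a * cG k a j = dG ^+ 2 * uG k)
  (hDF : forall k, \sum_a \sum_j sF j a * cF k a j = dF ^+ 2 * uF k) :
  forall l, (dG ^+ 2 * uF l)%:A = (dF ^+ 2 * uF l)%:A :> P.
Proof.
move=> l.
transitivity (\sum_a \sum_j sG j a *: \sum_i \sum_i' cF l i i' *: (p i a * p i' j)).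
  rewrite -scalerA -hU scaler_sumr.
  under eq_bigr => k _ do rewrite scalerA -hDG scaler_suml.
  under eq_bigr => k _ do under eq_bigr => a _ do rewrite scaler_suml.
  rewrite exchange_big; apply: eq_bigr => a _; rewrite exchange_big; apply: eq_bigr => j _.
  rewrite -hM scaler_sumr; apply: eq_bigr => k _; by rewrite scalerA.
transitivity (\sum_a \sum_i \sum_i' cF l i i' *: (p i a * \sum_j sG j a *: p i' j)).
  apply: eq_bigr => a _.
  under eq_bigr => j _ do rewrite scaler_sumr.
  under eq_bigr => j _ do under eq_bigr => i _ do rewrite scaler_sumr.
  rewrite exchange_big; apply: eq_bigr => i _; rewrite exchange_big; apply: eq_bigr => i' _.
  rewrite mulr_sumr scaler_sumr; apply: eq_bigr => j _.
  by rewrite !scalerA -!scalerAr scalerA mulrC.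
under eq_bigr => a _ do under eq_bigr => i _ do under eq_bigr => i' _ do
  rewrite hS mulr_sumr scaler_sumr.
rewrite exchange_big.
under eq_bigr => i _ do rewrite exchange_big.
transitivity (\sum_i \sum_i' \sum_t (cF l i i' * sF i' t) *: ((i == t)%:R : P)).
  apply: eq_bigr => i _; apply: eq_bigr => i' _.
  rewrite exchange_big; apply: eq_bigr => t _.
  rewrite -hU1 scaler_sumr; apply: eq_bigr => a _.
  by rewrite -scalerAr scalerA.
under eq_bigr => i _ do under eq_bigr => i' _ do rewrite sum_deltaA.
under eq_bigr => i _ do rewrite -scaler_suml.
rewrite -scaler_suml -hDF; congr (_ *: _).
by apply: eq_bigr => a _; apply: eq_bigr => j _; rewrite mulrC.
Qed.

Lemma star0 (P : algType C) (star : P -> P) : is_star star -> star 0 = 0.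
Proof. by case=> _ hZ _ _; have := hZ 0 0; rewrite scale0r conjC0 scale0r. Qed.

Lemma star1 (P : algType C) (star : P -> P) : is_star star -> star 1 = 1.
Proof.
case=> _ _ hM hK.
have := hM (star 1) 1; rewrite mulr1 hK mulr1 => h.
by apply/esym.
Qed.

Lemma star_sum (P : algType C) (star : P -> P) (T : finType) (F : T -> P) :
  is_star star -> star (\sum_t F t) = \sum_t star (F t).
Proof.
move=> hs; have h0 := star0 hs; case: hs => hD _ _ _.
by apply: (big_morph star hD h0).
Qed.

Lemma star_scale (P : algType C) (star : P -> P) (a : C) (x : P) :
  is_star star -> star (a *: x) = a^* *: star x.
Proof. by case=> _ hZ _ _; apply: hZ. Qed.

Lemma star_mul (P : algType C) (star : P -> P) (x y : P) :
  is_star star -> star (x * y) = star y * star x.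
Proof. by case=> _ _ hM _; apply: hM. Qed.

Lemma star_inv (P : algType C) (star : P -> P) (x : P) :
  is_star star -> star (star x) = x.
Proof. by case=> _ _ _ hK; apply: hK. Qed.

Lemma unitP (P : algType C) (star : P -> P) (IG IF : finType) (p : IF -> IG -> P)
  (uG : IG -> C) (uF : IF -> C) : is_star star ->
  (forall j l, \sum_i star (p i j) * p i l = (j == l)%:R) ->
  (forall l, \sum_k uG k *: p l k = (uF l)%:A) ->
  forall a, \sum_l (uF l)^* *: p l a = ((uG a)^*)%:A.
Proof.
move=> hs hU2 hU a.
have E : \sum_l uF l *: star (p l a) = (uG a)%:A.
  transitivity (\sum_l star (p l a) * \sum_k uG k *: p l k).
    by apply: eq_bigr => l _; rewrite hU -scalerAr mulr1.
  under eq_bigr => l _ do rewrite mulr_sumr.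
  rewrite exchange_big /=.
  transitivity (\sum_k uG k *: ((a == k)%:R : P)).
    apply: eq_bigr => k _; rewrite -hU2 scaler_sumr; apply: eq_bigr => l _.
    by rewrite scalerAr.
  by rewrite sum_deltaA.
have := congr1 star E; rewrite star_sum // star_scale // star1 //.
move=> <-; apply: eq_bigr => l _; by rewrite star_scale // star_inv.
Qed.

Lemma qgraph_D (G : qgraph) : is_qgraph G ->
  forall k, \sum_a \sum_j qstar G j a * qmul G k a j = qdelta G ^+ 2 * qunit G k.
Proof.
case=> hA [hU1 [hU2 [hS1 [hS2 [hP1 [hP2 [hd [hD _]]]]]]]].
apply: qD => //; exact: qH.
Qed.

Lemma qgraph_unit_nz (G : qgraph) : is_qgraph G -> exists l, qunit G l != 0.
Proof.
case=> _ [_ [_ [_ [_ [hP1 _]]]]].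
case: (pickP (fun l => qunit G l != 0)) => [l hl|h0]; first by exists l.
move: hP1; rewrite big1 => [|k _]; last by move/negbFE: (h0 k) => /eqP ->; rewrite mulr0.
by move/eqP; rewrite eq_sym oner_eq0.
Qed.

Lemma qgraph_delta_pos (G : qgraph) : is_qgraph G -> 0 < qdelta G.
Proof. by case=> _ [_ [_ [_ [_ [_ [_ [hd _]]]]]]]. Qed.

Lemma scalarA_inj (P : algType C) (x y : C) : x%:A = y%:A :> P -> x = y.
Proof.
move/eqP; rewrite -subr_eq0 -scalerBl scaler_eq0 oner_eq0 orbF subr_eq0.
by move/eqP.
Qed.

Lemma qiso_delta (G F : qgraph) : is_qgraph G -> is_qgraph F -> qiso G F ->
  qdelta G = qdelta F.
Proof.
move=> hG hF [P [star [p [hs [hu1 [hu2 [hM [hS [hU hAd]]]]]]]]].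
have E := qdelta2 hu1 hM hS hU (qgraph_D hG) (qgraph_D hF).
have [l hl] := qgraph_unit_nz hF.
have := scalarA_inj (E l); move/(mulIf hl) => /eqP.
have h1 := qgraph_delta_pos hG; have h2 := qgraph_delta_pos hF.
rewrite eqrXn2 //; [by move/eqP | exact: ltW h1 | exact: ltW h2].
Qed.

Definition myq (r : nat) (IG IF : finType) (P : algType C) (p : IF -> IG -> P)
  (x : option ('I_r * IF)) (y : option ('I_r * IG)) : P :=
  match x, y with
  | None, None => 1
  | Some (k, i), Some (k', j) => if k == k' then p i j else 0
  | _, _ => 0
  end.

Lemma sum_opt (T : finType) (V : nmodType) (f : option T -> V) :
  \sum_x f x = f None + \sum_x f (Some x).
Proof.
rewrite (bigD1 None) //=; congr (_ + _).
rewrite (reindex_omap Some (fun x => x)) //=.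
  by apply: eq_bigl => x; rewrite eqxx.
by case.
Qed.

Lemma sum_pair (T1 T2 : finType) (V : nmodType) (f : T1 * T2 -> V) :
  \sum_x f x = \sum_a \sum_b f (a, b).
Proof. by rewrite pair_bigA; apply: eq_bigr => -[]. Qed.

Lemma sum_myc (r : nat) (T : finType) (V : nmodType) (f : option ('I_r * T) -> V) :
  \sum_x f x = f None + \sum_k \sum_i f (Some (k, i)).
Proof. by rewrite sum_opt sum_pair. Qed.

Lemma sum_if1 (T : finType) (V : nmodType) (k0 : T) (f : T -> V) :
  \sum_k (if k0 == k then f k else 0) = f k0.
Proof.
rewrite (bigD1 k0) //= eqxx big1 ?addr0 // => k /negbTE.
by rewrite eq_sym => ->.
Qed.

Lemma sum_if2 (T1 T2 : finType) (V : nmodType) (k0 : T1) (F : T1 -> T2 -> V) :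
  \sum_k \sum_i (if k0 == k then F k i else 0) = \sum_i F k0 i.
Proof.
rewrite exchange_big; apply: eq_bigr => i _.
exact: (sum_if1 k0 (fun k => F k i)).
Qed.

Lemma sum_if2' (T1 T2 : finType) (V : nmodType) (k0 : T1) (F : T1 -> T2 -> V) :
  \sum_k \sum_i (if k == k0 then F k i else 0) = \sum_i F k0 i.
Proof.
rewrite -(sum_if2 k0); apply: eq_bigr => k _; apply: eq_bigr => i _.
by rewrite eq_sym.
Qed.

Lemma if0_mull (R : pzSemiRingType) (b : bool) (x y : R) :
  (if b then x else 0) * y = if b then x * y else 0.
Proof. by case: b; rewrite ?mul0r. Qed.
Lemma if0_mulr (R : pzSemiRingType) (b : bool) (x y : R) :
  x * (if b then y else 0) = if b then x * y else 0.
Proof. by case: b; rewrite ?mulr0. Qed.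
Lemma if0_scaler (P : algType C) (b : bool) (a : C) (y : P) :
  a *: (if b then y else 0) = if b then a *: y else 0.
Proof. by case: b; rewrite ?scaler0. Qed.
Lemma if0_scalel (P : algType C) (b : bool) (a : C) (y : P) :
  (if b then a else 0) *: y = if b then a *: y else 0.
Proof. by case: b; rewrite ?scale0r. Qed.
Lemma if0_star (P : algType C) (star : P -> P) (b : bool) (y : P) : is_star star ->
  star (if b then y else 0) = if b then star y else 0.
Proof. by case: b => // hs; rewrite star0. Qed.
Lemma if0_and (V : nmodType) (a b : bool) (x : V) :
  (if a && b then x else 0) = if a then (if b then x else 0) else 0.
Proof. by case: a. Qed.

Lemma someE (T1 T2 : eqType) (a c : T1) (b d : T2) :
  (Some (a, b) == Some (c, d)) = (a == c) && (b == d).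
Proof. by []. Qed.

Lemma sum_ifout (T : finType) (V : nmodType) (b : bool) (f : T -> V) :
  \sum_x (if b then f x else 0) = if b then \sum_x f x else 0.
Proof. by case: b; rewrite // big1. Qed.

Ltac zt := repeat (first [ progress rewrite ?scale0r ?scaler0 ?mul0r ?mulr0 ?addr0 ?add0r
                         | apply: big1 => -[[? ?]|] _ /=
                         | apply: big1 => ? _ /= ]).

Lemma qiso_myc (r : nat) (G F : qgraph) : is_qgraph G -> is_qgraph F -> qiso G F ->
  qiso (myc r G) (myc r F).
Proof.
move=> hG hF hiso; have hd := qiso_delta hG hF hiso.
case: hiso => P [star [p [hs [hu1 [hu2 [hM [hS [hU hAd]]]]]]]].
have hUU := unitP hs hu2 hU.
exists P, star, (myq p); split; first done.
split.
  move=> [[k1 i]|] [[k2 k]|]; rewrite sum_myc /=.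
  - rewrite mul0r add0r.
    under eq_bigr => k3 _ do under eq_bigr => j _ do rewrite if0_mull (if0_star _ _ hs) if0_mulr.
    rewrite sum_if2 someE; case: (k2 =P k1) => [->|ne].
      by rewrite hu1 eqxx.
    by rewrite big1 //; case: eqP ne => // ->.
  - rewrite (star0 hs) mul0r add0r big1 // => k5 _; rewrite big1 // => j5 _.
    by rewrite mulr0.
  - rewrite (star0 hs) mulr0 add0r big1 // => k5 _; rewrite big1 // => j5 _.
    by rewrite mul0r.
  - rewrite (star1 hs) mulr1 big1 ?addr0 // => k5 _; rewrite big1 // => j5 _.
    by rewrite mul0r.
split.
  move=> [[k1 j]|] [[k2 l]|]; rewrite sum_myc /=.
  - rewrite mulr0 add0r.
    under eq_bigr => k3 _ do under eq_bigr => i _ do rewrite (if0_star _ _ hs) if0_mull if0_mulr.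
    rewrite sum_if2' someE; case: (k1 =P k2) => _ /=; [exact: hu2 | by rewrite big1].
  - rewrite (star0 hs) mul0r add0r big1 // => k5 _; rewrite big1 // => j5 _.
    by rewrite mulr0.
  - rewrite mulr0 add0r big1 // => k5 _; rewrite big1 // => j5 _.
    by rewrite (star0 hs) mul0r.
  - rewrite (star1 hs) mulr1 big1 ?addr0 // => k5 _; rewrite big1 // => j5 _.
    by rewrite mulr0.
have smG := @sum_myc r (qidx G) P; have smF := @sum_myc r (qidx F) P.
split.
{ move=> [[k0 l]|] [[ka a]|] [[kb b]|].
  - rewrite smG smF /= smF /= !scale0r !add0r.
    rewrite [X in _ = X + _]big1 ?add0r; last by move=> *; zt.
    under [in RHS]eq_bigr => k _ do under eq_bigr => i _ do rewrite smF /= scale0r add0r.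
    rewrite hd.
    under eq_bigr => k _ do under eq_bigr => i _ do rewrite (if0_and (V:=C)) if0_scalel !if0_scaler.
    rewrite sum_if2.
    under [in RHS]eq_bigr => k _ do under eq_bigr => i _ do under eq_bigr => k1 _ do
      under eq_bigr => i1 _ do rewrite (if0_and (V:=C)) if0_scalel if0_scalel if0_mull if0_mulr !if0_scaler.
    under [in RHS]eq_bigr => k _ do under eq_bigr => i _ do under eq_bigr => k1 _ do rewrite sum_ifout.
    under [in RHS]eq_bigr => k _ do under eq_bigr => i _ do rewrite sum_ifout.
    rewrite sum_if2'.
    under [in RHS]eq_bigr => i _ do rewrite sum_if2'.
    case: (k0 =P ka) => [<-|_]; last by transitivity (0 : P); [|apply/esym]; zt.
    rewrite [kb == _]eq_sym; case: (k0 =P kb) => [_|_] /=; last first.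
      by transitivity (0 : P); [|apply/esym]; zt.
    under eq_bigr => i _ do rewrite -scalerA.
    rewrite -scaler_sumr hM scaler_sumr; apply: eq_bigr => i _.
    rewrite scaler_sumr; apply: eq_bigr => j _; by rewrite scalerA.
  7: rewrite smG smF /= smF /= !big1 ?addr0 ?mulr1 ?hd //; by move=> *; zt.
  all: transitivity (0 : P); [|apply/esym].
  all: by zt. }
split.
{ move=> [[k0 l]|] [[ka a]|].
  - rewrite smG smF /= !scale0r !add0r.
    under eq_bigr => k _ do under eq_bigr => i _ do rewrite if0_scalel if0_scaler.
    under [in RHS]eq_bigr => k _ do under eq_bigr => i _ do
      rewrite (if0_star _ _ hs) if0_scalel if0_scaler.
    rewrite sum_if2' sum_if2; case: (k0 =P ka) => [_|_] /=; last first.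
      by transitivity (0 : P); [|apply/esym]; zt.
    exact: hS.
  - by rewrite smG smF /= (star0 hs); transitivity (0 : P); [|apply/esym]; zt.
  - by rewrite smG smF /= (star0 hs); transitivity (0 : P); [|apply/esym]; zt.
  - rewrite smG smF /= (star1 hs) !big1 ?addr0 //; by move=> *; zt. }
split.
{ move=> [[k0 l]|].
  - rewrite smG /= scaler0 add0r hd.
    under eq_bigr => k _ do under eq_bigr => i _ do rewrite if0_scaler.
    rewrite sum_if2.
    under eq_bigr => i _ do rewrite mulrC -scalerA.
    by rewrite -scaler_sumr hU scalerA mulrC.
  - rewrite smG /= big1 ?addr0 ?hd // => *; by zt. }
move=> [[k0 l]|] [[k1 j]|].
- rewrite smG smF /= !scaler0 !add0r.
  under eq_bigr => k _ do under eq_bigr => i _ do rewrite if0_scaler.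
  under [in RHS]eq_bigr => k _ do under eq_bigr => i _ do rewrite if0_scaler.
  rewrite sum_if2 sum_if2'; case: (myc_link r k0 k1) => /=; first exact: hAd.
  by transitivity (0 : P); [|apply/esym]; zt.
- rewrite smG smF /= scale0r add0r hd [X in _ = _ + X]big1 ?addr0; last by move=> *; zt.
  under eq_bigr => k _ do under eq_bigr => i _ do rewrite if0_scaler.
  rewrite sum_if2; case: (_ == _) => /=; last by zt.
  under eq_bigr => i _ do rewrite mulrAC -scalerA.
  by rewrite -scaler_sumr hU scalerA mulrAC.
- rewrite smG smF /= scale0r add0r hd [X in _ + X = _]big1 ?addr0; last by move=> *; zt.
  under [in RHS]eq_bigr => k _ do under eq_bigr => i _ do rewrite if0_scaler.
  rewrite sum_if2'; case: (_ == _) => /=; last by apply/esym; zt.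
  under [in RHS]eq_bigr => i _ do rewrite mulrAC -scalerA.
  by rewrite -scaler_sumr hUU scalerA mulrAC.
- rewrite smG smF /= !scale0r !add0r.
  by transitivity (0 : P); [|apply/esym]; zt.
Qed.

Theorem mainTheorem2 (G F : qgraph) :
  is_qgraph G -> is_qgraph F -> qiso G F ->
  forall r : nat, (1 <= r)%N -> qiso (qmu r.-1 G) (qmu r.-1 F).
Proof.
move=> hG hF hiso [|[|n]] // _.
exact: qiso_myc.
Qed.
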